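(* Consider the following scheduling market. There are $d$ machine types; $M_k$ is the finite set of machines of type $k$, and the goods are all machines $(j,k)$, $j\in M_k$, each of supply $1$. Each agent (job) $i\in A$ has requirements $r_{ik}\ge0$ and covering constraints $\sum_{j\in M_k}x_{ijk}\ge r_{ik}$ for all $k\in[d]$, $x_{ijk}\ge0$. All agents face the same delay $d_{jk}\ge0$ on machine $j$ of type $k$. Assume $|M_k|\ge\sum_{i\in A}r_{ik}$ for every $k$. Then this market satisfies extensibility.
   Context: An allocation $X\ge0$ is supply respecting if each good is allocated in total at most $1$. For a set of agents $S$, an allocation $X$ is jointly optimal for $S$ if it satisfies the covering constraints of all $i\in S$, is supply respecting, and minimizes the total delay $\sum_{i\in S}\sum_{k}\sum_{j\in M_k}d_{jk}x_{ijk}$ among such allocations. A market satisfies extensibility if for every $S\subset A$, every $X$ jointly optimal for $S$ and every $i\in A\setminus S$, there is $X'$ jointly optimal for $S\cup\{i\}$ such that every agent $i'\in S$ has the same delay $\sum_{k,j}d_{jk}x'_{i'jk}=\sum_{k,j}d_{jk}x_{i'jk}$. *)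

(* Defs.v *)
From HB Require Import structures.
From mathcomp Require Import all_boot all_order all_algebra.
Set Implicit Arguments. Unset Strict Implicit. Unset Printing Implicit Defensive.
Import Order.TTheory GRing.Theory Num.Theory.
Local Open Scope ring_scope.

(* Goods: machines, a finite type [Mach]; machine
     [j] has type [typ j], so M_k = [set j | typ j == k].  Each machine has
     supply 1.
   - An allocation is [X : Ag -> Mach -> R]; X i j is x_{i j (typ j)}. *)

Section Market.
Variables (R : realFieldType) (Ag Mach : finType) (d : nat) (typ : Mach -> 'I_d).
Variables (r : Ag -> 'I_d -> R) (del : Mach -> R).

Definition agent_delay (X : Ag -> Mach -> R) (i : Ag) : R :=
  \sum_(j : Mach) del j * X i j.

Definition total_delay (S : {set Ag}) (X : Ag -> Mach -> R) : R :=
  \sum_(i in S) agent_delay X i.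

Definition covers (S : {set Ag}) (X : Ag -> Mach -> R) : Prop :=
  forall i, i \in S ->
    (forall j, 0 <= X i j) /\
    (forall k : 'I_d, r i k <= \sum_(j | typ j == k) X i j).

Definition supply_respecting (S : {set Ag}) (X : Ag -> Mach -> R) : Prop :=
  forall j : Mach, \sum_(i in S) X i j <= 1.

Definition jointly_optimal (S : {set Ag}) (X : Ag -> Mach -> R) : Prop :=
  [/\ covers S X, supply_respecting S X &
      forall Y, covers S Y -> supply_respecting S Y ->
        total_delay S X <= total_delay S Y].

Definition extensibility : Prop :=
  forall (S : {set Ag}) (X : Ag -> Mach -> R), jointly_optimal S X ->
  forall i, i \notin S ->
  exists X', jointly_optimal (i |: S) X' /\
    forall i', i' \in S -> agent_delay X' i' = agent_delay X i'.

End Market.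

(* Main.v *)
Require Import Defs.
From HB Require Import structures.
From mathcomp Require Import all_boot all_order all_algebra.
From mathcomp Require Import ring lra.
Import Order.TTheory GRing.Theory Num.Theory.
Set Implicit Arguments. Unset Strict Implicit.
Local Open Scope ring_scope.

Lemma sum_delta (R : realFieldType) (T : finType) (P : pred T) (a : T) (F : T -> R) :
  \sum_(b | P b) (b == a)%:R * F b = (P a)%:R * F a.
Proof.
case Pa: (P a).
  rewrite (bigD1 a) //= eqxx mul1r big1 ?addr0 // => b /andP[_ nb].
  by rewrite (negbTE nb) mul0r.
rewrite mul0r big1 // => b Pb; case: eqP => [eba|]; last by rewrite mul0r.
by move: Pb; rewrite eba Pa.
Qed.

Lemma sum_delta1 (R : realFieldType) (T : finType) (P : pred T) (a : T) (F : T -> R) :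
  P a -> \sum_(b | P b) (b == a)%:R * F b = F a.
Proof. by move=> Pa; rewrite sum_delta Pa mul1r. Qed.

Lemma sum_sub (R : realFieldType) (T : finType) (P Q : pred T) (F : T -> R) :
  (forall j, P j -> Q j) -> (forall j, Q j -> 0 <= F j) ->
  \sum_(j | P j) F j <= \sum_(j | Q j) F j.
Proof.
move=> PQ F0; rewrite [X in _ <= X](bigID P) /=.
rewrite (eq_bigl P); last by move=> j; case Pj: (P j); rewrite ?andbT ?andbF ?PQ.
by rewrite lerDl sumr_ge0 // => j /andP[/F0].
Qed.

Lemma split3 (R : realFieldType) (T : finType) (P : pred T) (h : T -> R) (lam : R) (F : T -> R) :
  \sum_(j | P j) F j = \sum_(j | P j && (h j < lam)) F j
     + \sum_(j | P j && (h j == lam)) F j + \sum_(j | P j && (lam < h j)) F j.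
Proof.
rewrite (bigID (fun j => h j < lam)) /= -addrA; congr (_ + _).
rewrite (bigID (fun j => h j == lam)) /=; congr (_ + _); apply: eq_bigl => j;
  by case: ltgtP; rewrite ?andbT ?andbF.
Qed.

Lemma split2 (R : realFieldType) (T : finType) (P : pred T) (h : T -> R) (lam : R) (F : T -> R) :
  \sum_(j | P j && (h j <= lam)) F j = \sum_(j | P j && (h j < lam)) F j
     + \sum_(j | P j && (h j == lam)) F j.
Proof.
rewrite (bigID (fun j => h j < lam)) /=; congr (_ + _); apply: eq_bigl => j;
  by case: ltgtP; rewrite ?andbT ?andbF.
Qed.

Lemma exmin (R : realDomainType) (T : finType) (P : pred T) (h : T -> R) j0 :
  P j0 -> exists2 j, P j & forall l, P l -> h j <= h l.
Proof.
move=> P0; case: (arg_minP h P0) => j Pj hj; exists j => //.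
Qed.

Lemma improve (R : realFieldType) (Ag Mach : finType) (d : nat)
  (typ : Mach -> 'I_d) (r : Ag -> 'I_d -> R) (del : Mach -> R)
  (S : {set Ag}) (Z : Ag -> Mach -> R) (a : Ag) (g : Mach -> R) :
  jointly_optimal typ r del S Z -> a \in S ->
  (forall l, 0 <= Z a l + g l) ->
  (forall k, r a k <= \sum_(l | typ l == k) (Z a l + g l)) ->
  (forall l, \sum_(b in S) Z b l + g l <= 1) ->
  0 <= \sum_l del l * g l.
Proof.
move=> [cZ sZ oZ] aS h0 hc hs.
pose Y b l := Z b l + (b == a)%:R * g l.
have cY : covers typ r S Y.
  move=> b bS; rewrite /Y; case: (eqVneq b a) => [->|nba].
    by split => [l|k]; rewrite ?mul1r //; under eq_bigr do rewrite mul1r.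
  by split => [l|k]; rewrite ?mul0r ?addr0; [case: (cZ b bS)|];
    [|under eq_bigr do rewrite mul0r addr0; case: (cZ b bS)].
have sY : supply_respecting S Y.
  move=> l; rewrite /Y big_split /= (sum_delta1 (fun _ => g l) aS).
  exact: hs.
have := oZ Y cY sY.
have -> : total_delay del S Y = total_delay del S Z + \sum_l del l * g l.
  rewrite /total_delay /agent_delay /Y.
  under eq_bigr do (under eq_bigr do rewrite mulrDr; rewrite big_split /=).
  rewrite big_split /=; congr (_ + _).
  under eq_bigr do (under eq_bigr do rewrite mulrCA; rewrite -mulr_sumr).
  exact: (sum_delta1 (fun _ => \sum_l del l * g l) aS).
lra.
Qed.

Theorem lemmaD1 (R : realFieldType) (Ag Mach : finType) (d : nat)
  (typ : Mach -> 'I_d) (r : Ag -> 'I_d -> R) (del : Mach -> R)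
  (hr : forall i k, 0 <= r i k)
  (hdel : forall j, 0 <= del j)
  (hcap : forall k : 'I_d,
     \sum_(i : Ag) r i k <= (#|[set j | typ j == k]|)%:R) :
  extensibility typ r del.
Proof.
move=> S X optX i iS.
have [covX supX oX] := optX.
pose cov a k := \sum_(j | typ j == k) X a j.
pose f a k := if r a k < cov a k then r a k / cov a k else 1.
pose X2 a j := X a j * f a (typ j).
have f01 : forall a k, 0 <= f a k <= 1.
  move=> a k; rewrite /f; case: ifP => h; last by rewrite ler01 lexx.
  have hc : 0 < cov a k by apply: le_lt_trans h.
  by rewrite divr_ge0 ?hr ?(ltW hc) //= ler_pdivrMr // mul1r ltW.
have X0 : forall a j, a \in S -> 0 <= X a j by move=> a j aS; case: (covX a aS).
have X2ge0 : forall a j, a \in S -> 0 <= X2 a j.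
  by move=> a j aS; rewrite mulr_ge0 ?X0 //; case/andP: (f01 a (typ j)).
have X2le : forall a j, a \in S -> X2 a j <= X a j.
  move=> a j aS; rewrite /X2 ler_piMr ?X0 //; by case/andP: (f01 a (typ j)).
have X2cov : forall a k, a \in S -> \sum_(j | typ j == k) X2 a j = r a k.
  move=> a k aS; rewrite /X2.
  under eq_bigr => j /eqP -> do [].
  rewrite -mulr_suml -/(cov a k) /f; case: ifP => h.
    have hc : 0 < cov a k by apply: le_lt_trans h.
    by rewrite mulrC divfK // gt_eqF.
  have := (covX a aS).2 k; rewrite -/(cov a k) mulr1 => h2.
  by apply/eqP; rewrite eq_le h2 leNgt h.
have slack : forall a j, a \in S -> r a (typ j) < cov a (typ j) -> del j * X a j = 0.
  move=> a j aS hlt; apply/eqP; rewrite mulf_eq0; apply/negPn/negP => /norP[hd hx].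
  have hdp : 0 < del j by rewrite lt_def hd hdel.
  have hxp : 0 < X a j by rewrite lt_def hx X0.
  pose eps := if cov a (typ j) - r a (typ j) <= X a j then cov a (typ j) - r a (typ j) else X a j.
  have he1 : 0 < eps by rewrite /eps; case: ifP => _; lra.
  have he2 : eps <= X a j by rewrite /eps; case: ifP => h; lra.
  have he3 : eps <= cov a (typ j) - r a (typ j) by rewrite /eps; case: ifP => h; lra.
  have hneg : del j * - eps < 0 by nra.
  suff : 0 <= del j * - eps by lra.
  have -> : del j * - eps = \sum_l del l * ((l == j)%:R * - eps).
    by under eq_bigr do rewrite mulrCA; rewrite (sum_delta1 (fun l => del l * - eps)).
  apply: (improve (g := fun l => (l == j)%:R * (- eps)) optX aS) => [l|k|l].
  - by case: eqP => [->|_]; rewrite ?mul1r ?mul0r ?addr0 ?X0 //; lra.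
  - rewrite big_split /= sum_delta -/(cov a k).
    have := (covX a aS).2 k; rewrite -/(cov a k).
    by case: eqP => [<-|_]; rewrite ?mul1r ?mul0r ?addr0 //; lra.
  - have := supX l; case: eqP => _; rewrite ?mul1r ?mul0r; lra.
have dX2 : forall a, a \in S -> agent_delay del X2 a = agent_delay del X a.
  move=> a aS; apply: eq_bigr => j _; rewrite /X2 /f; case: ifP => h.
    by rewrite mulrA (slack a j aS h) mul0r.
  by rewrite mulr1.
have optX2 : jointly_optimal typ r del S X2.
  split.
  - by move=> a aS; split => [j|k]; rewrite ?X2ge0 ?X2cov.
  - by move=> j; apply: le_trans (supX j); apply: ler_sum => a aS; apply: X2le.
  - move=> Y cY sY; apply: le_trans (oX Y cY sY).
    by rewrite le_eqVlt; apply/orP; left; apply/eqP; apply: eq_bigr => a aS; rewrite dX2.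
pose w2 l := \sum_(a in S) X2 a l.
have w2ge0 : forall l, 0 <= w2 l by move=> l; apply: sumr_ge0 => a aS; apply: X2ge0.
have w2le1 : forall l, w2 l <= 1.
  by move=> l; apply: le_trans (supX l); apply: ler_sum => a aS; apply: X2le.
have greedy : forall j j', typ j = typ j' -> del j < del j' -> w2 j < 1 -> w2 j' = 0.
  move=> j j' ht hd hw; apply/eqP; apply/negPn/negP => hnz.
  have hjj : j != j' by apply/eqP => e; move: hd; rewrite e ltxx.
  case: (pickP [pred a | (a \in S) && (0 < X2 a j')]) => [a /andP[aS ha]|hn]; last first.
    move: hnz; rewrite /w2 big1 ?eqxx // => a aS; have := hn a; rewrite /= aS /=.
    by move/negbT; rewrite -leNgt => h; apply/eqP; rewrite eq_le h X2ge0.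
  pose eps := if 1 - w2 j <= X2 a j' then 1 - w2 j else X2 a j'.
  have he1 : 0 < eps by rewrite /eps; case: ifP => _; lra.
  have he2 : eps <= X2 a j' by rewrite /eps; case: ifP => h; lra.
  have he3 : eps <= 1 - w2 j by rewrite /eps; case: ifP => h; lra.
  have hneg : del j * eps - del j' * eps < 0 by nra.
  suff : 0 <= del j * eps - del j' * eps by lra.
  have -> : del j * eps - del j' * eps =
      \sum_l del l * ((l == j)%:R * eps - (l == j')%:R * eps).
    under eq_bigr do rewrite mulrBr mulrCA [del _ * (_ * eps)]mulrCA.
    by rewrite sumrB (sum_delta1 (fun l => del l * eps)) // (sum_delta1 (fun l => del l * eps)).
  apply: (improve (g := fun l => (l == j)%:R * eps - (l == j')%:R * eps) optX2 aS) => [l|k|l].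
  - have := X2ge0 a l aS.
    case: (eqVneq l j) => [->|nlj]; first by rewrite (negbTE hjj) mul1r mul0r; lra.
    rewrite mul0r; case: (eqVneq l j') => [->|_]; rewrite ?mul1r ?mul0r; lra.
  - rewrite big_split /= sumrB !sum_delta X2cov // ht; lra.
  - rewrite -/(w2 l); have := w2le1 l.
    case: (eqVneq l j) => [->|nlj]; first by rewrite (negbTE hjj) mul1r mul0r; lra.
    rewrite mul0r; case: (eqVneq l j') => [->|_]; rewrite ?mul1r ?mul0r; lra.
pose T k := \sum_(b in S) r b k.
pose Tp k := \sum_(b in i |: S) r b k.
have hTp : forall k, Tp k = r i k + T k by move=> k; rewrite /Tp big_setU1.
have sumw2 : forall k, \sum_(l | typ l == k) w2 l = T k.
  by move=> k; rewrite /w2 exchange_big /=; apply: eq_bigr => a aS; rewrite X2cov.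
have Tcap : forall k, Tp k <= \sum_(j | typ j == k) (1 : R).
  move=> k; have -> : \sum_(j | typ j == k) (1 : R) = (#|[set j | typ j == k]|)%:R.
    by rewrite sumr_const cardsE.
  apply: le_trans (hcap k).
  by apply: (sum_sub (Q := xpredT)) => // b _; apply: hr.
have Tge0 : forall k, 0 <= T k by move=> k; apply: sumr_ge0 => b _; apply: hr.
have exlam : forall k, exists lam, [/\ 0 <= lam,
    \sum_(j | (typ j == k) && (del j < lam)) (1 : R) <= Tp k &
    Tp k <= \sum_(j | (typ j == k) && (del j <= lam)) (1 : R)].
  move=> k.
  case: (pickP [pred j | (typ j == k) && (Tp k <= \sum_(l | (typ l == k) && (del l <= del j)) (1 : R))])
    => [j0 Pj0|hn].
    have [j /andP[tj Pj] jmin] := exmin del Pj0.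
    exists (del j); split => //.
    case: (pickP [pred l | (typ l == k) && (del l < del j)]) => [l0 Pl0|hn]; last first.
      rewrite big_pred0; first by rewrite hTp; have := hr i k; have := Tge0 k; lra.
      by move=> l; have := hn l.
    have [l /andP[tl ll] lmax] := exmin (fun l => - del l) Pl0.
    rewrite leNgt; apply/negP => hlt.
    have : Tp k <= \sum_(m | (typ m == k) && (del m <= del l)) (1 : R).
      apply: ltW; apply: lt_le_trans hlt _; apply: sum_sub => // m /andP[tm dm].
      by rewrite tm /=; have := lmax m; rewrite /= tm dm /=; move/(_ isT); rewrite lerN2.
    move=> hP; have := jmin l; rewrite /= tl hP /= => /(_ isT); rewrite leNgt ll //.
  exists 0; split => //; rewrite ?lexx //.
    rewrite big_pred0; first by rewrite hTp; have := hr i k; have := Tge0 k; lra.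
    by move=> l; rewrite ltNge hdel andbF.
  case: (pickP [pred l | typ l == k]) => [l0 Pl0|hn2]; last first.
    apply: le_trans (Tcap k) _; rewrite big_pred0 ?sumr_ge0 //; by move=> l; have := hn2 l.
  have [l tl lmax] := exmin (fun l => - del l) Pl0; move: tl => /= tl.
  have := hn l; rewrite /= tl /=; move/negbT; rewrite -ltNge => hlt.
  exfalso; move: hlt; apply/negP; rewrite -leNgt; apply: le_trans (Tcap k) _.
  apply: sum_sub => // m tm; rewrite tm /=; have := lmax m tm; rewrite lerN2 //.
have [lam hlam] := fin_all_exists exlam.
have lam0 : forall k, 0 <= lam k by move=> k; case: (hlam k).
have G1 : forall l, lam (typ l) < del l -> w2 l = 0.
  move=> l hl; apply/eqP; apply/negPn/negP => hnz.
  have hp : 0 < w2 l by rewrite lt_def hnz w2ge0.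
  set k := typ l.
  have full : forall m, typ m == k -> del m <= lam k -> 1 <= w2 m.
    move=> m /eqP tm dm; rewrite leNgt; apply/negP => hm.
    have := greedy m l; rewrite tm => /(_ erefl); move/(_ (le_lt_trans dm hl) hm) => h0.
    by move: hp; rewrite h0 ltxx.
  have := sumw2 k; rewrite (bigID (fun m => del m <= lam k)) /=.
  have h1 : \sum_(m | (typ m == k) && (del m <= lam k)) (1 : R) <=
            \sum_(m | (typ m == k) && (del m <= lam k)) w2 m.
    by apply: ler_sum => m /andP[tm dm]; apply: full.
  have h2 : w2 l <= \sum_(m | (typ m == k) && ~~ (del m <= lam k)) w2 m.
    rewrite (bigD1 l) /=; last by rewrite eqxx -ltNge hl.
    by rewrite lerDl sumr_ge0.
  case: (hlam k) => _ _ h3; have := hTp k; have := hr i k; lra.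
pose C k := \sum_(l | (typ l == k) && (del l == lam k)) (1 - w2 l).
pose Rk k := r i k - \sum_(l | (typ l == k) && (del l < lam k)) (1 - w2 l).
have G2 : forall k, 0 <= Rk k <= C k.
  move=> k; apply/andP; split.
    case: (pickP [pred l | [&& typ l == k, del l == lam k & 0 < w2 l]]) => [l /and3P[tl dl wl]|hn].
      rewrite /Rk; suff : \sum_(m | (typ m == k) && (del m < lam k)) (1 - w2 m) <= 0.
        by have := hr i k; lra.
      apply: sumr_le0 => m /andP[tm dm]; rewrite subr_le0 leNgt; apply/negP => hm.
      have := greedy m l; rewrite (eqP tm) (eqP tl) (eqP dl) => /(_ erefl dm hm) h0.
      by move: wl; rewrite h0 ltxx.
    have e0 : \sum_(m | (typ m == k) && (del m == lam k)) w2 m = 0.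
      apply: big1 => m /andP[tm dm]; have := hn m; rewrite /= tm dm /= => /negbT.
      by rewrite -leNgt => h; apply/eqP; rewrite eq_le h w2ge0.
    have e1 : \sum_(m | (typ m == k) && (lam k < del m)) w2 m = 0.
      by apply: big1 => m /andP[tm dm]; apply: G1; rewrite (eqP tm).
    have := sumw2 k; rewrite (split3 _ del (lam k)) e0 e1 /Rk sumrB => h.
    case: (hlam k) => _ h3 _; have := hTp k; lra.
  have e1 : \sum_(m | (typ m == k) && (lam k < del m)) w2 m = 0.
    by apply: big1 => m /andP[tm dm]; apply: G1; rewrite (eqP tm).
  have := sumw2 k; rewrite (split3 _ del (lam k)) e1 => h.
  case: (hlam k) => _ _; rewrite split2 /Rk /C !sumrB => h3.
  have := hTp k; lra.
pose rho k := if C k == 0 then 0 else Rk k / C k.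
have C0 : forall k, 0 <= C k by move=> k; apply: sumr_ge0 => l _; have := w2le1 l; lra.
have rho01 : forall k, 0 <= rho k <= 1.
  move=> k; rewrite /rho; case: eqP => hc; first by rewrite lexx ler01.
  have hcp : 0 < C k by rewrite lt_def C0 andbT; apply/eqP.
  have /andP[g1 g2] := G2 k.
  by rewrite divr_ge0 ?(ltW hcp) //= ler_pdivrMr // mul1r.
have rhoC : forall k, rho k * C k = Rk k.
  move=> k; rewrite /rho; case: eqP => hc.
    by have /andP[g1 g2] := G2 k; rewrite mul0r; apply/eqP; rewrite eq_le g1 -hc g2.
  by rewrite divfK //; apply/eqP.
pose y l := if del l < lam (typ l) then 1 - w2 l
            else if del l == lam (typ l) then (1 - w2 l) * rho (typ l) else 0.
have y0 : forall l, 0 <= y l.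
  move=> l; rewrite /y; have := w2le1 l; have /andP[r1 r2] := rho01 (typ l).
  case: ifP => _; first lra; case: ifP => _ //; nra.
have yle : forall l, y l + w2 l <= 1.
  move=> l; rewrite /y; have := w2le1 l; have := w2ge0 l; have /andP[r1 r2] := rho01 (typ l).
  case: ifP => h1; first lra; case: ifP => h2; first nra.
  rewrite G1; first lra.
  by move: h1 h2; case: ltgtP.
have ysum : forall k, \sum_(l | typ l == k) y l = r i k.
  move=> k; rewrite (split3 _ del (lam k)).
  have -> : \sum_(l | (typ l == k) && (del l < lam k)) y l =
            \sum_(l | (typ l == k) && (del l < lam k)) (1 - w2 l).
    by apply: eq_bigr => l /andP[/eqP tl dl]; rewrite /y tl dl.
  have -> : \sum_(l | (typ l == k) && (del l == lam k)) y l = C k * rho k.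
    rewrite /C mulr_suml; apply: eq_bigr => l /andP[/eqP tl /eqP dl].
    by rewrite /y tl dl ltxx eqxx.
  have -> : \sum_(l | (typ l == k) && (lam k < del l)) y l = 0.
    by apply: big1 => l /andP[/eqP tl dl]; rewrite /y tl (lt_gtF dl) (gt_eqF dl).
  by rewrite mulrC rhoC /Rk; lra.
pose X' a l := if a == i then y l else X2 a l.
have nai : forall a, a \in S -> (a == i) = false.
  by move=> a aS; apply/negbTE; apply: contraNneq iS => <-.
have loadX : forall l, \sum_(b in i |: S) X' b l = y l + w2 l.
  move=> l; rewrite big_setU1 //= /X' eqxx; congr (_ + _).
  by apply: eq_bigr => b bS; rewrite nai.
pose v Z l := \sum_(b in i |: S) (Z : Ag -> Mach -> R) b l.
have decomp : forall Z, total_delay del (i |: S) Z =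
    \sum_l (del l - lam (typ l)) * v Z l + \sum_k lam k * \sum_(l | typ l == k) v Z l.
  move=> Z; rewrite /total_delay /agent_delay exchange_big /=.
  under eq_bigr do rewrite -mulr_sumr.
  have e : \sum_l lam (typ l) * v Z l = \sum_k lam k * \sum_(l | typ l == k) v Z l.
    rewrite (partition_big typ xpredT) //=; apply: eq_bigr => k _; rewrite mulr_sumr.
    by apply: eq_big => [l|l /eqP ->] //.
  rewrite -e -big_split /=; apply: eq_bigr => l _; rewrite /v; ring.
exists X'; split; last first.
  by move=> a aS; rewrite -dX2 //; apply: eq_bigr => j _; rewrite /X' (nai a aS).
split.
- move=> a; rewrite in_setU1 => /orP[/eqP ->|aS].
    rewrite /X' eqxx; split => // k; by rewrite ysum.
  rewrite /X' nai //; split => [j|k]; first exact: X2ge0.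
  by rewrite X2cov.
- by move=> l; rewrite loadX.
- move=> Y cY sY; rewrite !decomp; apply: lerD.
    apply: ler_sum => l _; rewrite /v loadX.
    have hv1 := sY l.
    have hv0 : 0 <= \sum_(b in i |: S) Y b l by apply: sumr_ge0 => b bS; case: (cY b bS).
    have := G1 l; rewrite /y.
    case: ltgtP => h G.
    - by rewrite G // add0r mulr0; apply: mulr_ge0 => //; rewrite subr_ge0 ltW.
    - rewrite subrK mulr1; nra.
    - by rewrite h subrr !mul0r.
  apply: ler_sum => k _; apply: ler_wpM2l => //.
  have -> : \sum_(l | typ l == k) v X' l = Tp k.
    rewrite /v; under eq_bigr do rewrite loadX; rewrite big_split /= ysum sumw2 hTp //.
  rewrite /v exchange_big /=; apply: ler_sum => b bS; by case: (cY b bS).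
Qed.
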